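(* Define $f:\mathfrak E_{\mathrm c}\to (\{0\}\cup\{1/n:n=1,2,3,\dots\})^\omega\times[0,1]$ by $f(x)=\big\langle x,\tfrac{1+\sin\|x\|}{2}\big\rangle$, where the codomain carries the product topology. Then $f$ is a continuous injection and $Y=f(\mathfrak E_{\mathrm c})$ is totally disconnected and cohesive but not almost zero-dimensional.
   Context: $\ell^2$ is the Hilbert space of square-summable real sequences with norm $\|\cdot\|$; complete Erdős space is $\mathfrak E_{\mathrm c}=\{x\in\ell^2: x_i\in\{0\}\cup\{1/n:n\geq 1\}\text{ for each } i<\omega\}$ with the norm topology. A subset $A$ of a space $X$ is a C-set in $X$ if it is an intersection of clopen subsets of $X$. $X$ is totally disconnected if every singleton is a C-set. $X$ is almost zero-dimensional if every point has a neighborhood basis consisting of C-sets in $X$. $X$ is cohesive if every point has a neighborhood containing no non-empty clopen subset of $X$. *)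

(* Defs.v *)
From Stdlib Require Import Reals Lra ClassicalEpsilon.
Open Scope R_scope.

(** * Generic (subspace-style) topology vocabulary.
    A space is given by a carrier [A : X -> Prop] and a predicate [O] on
    subsets of X describing its open sets (all of which are subsets of A). *)

Definition subset {X} (U V : X -> Prop) := forall x, U x -> V x.

Definition sub_open {X} (O : (X -> Prop) -> Prop) (B : X -> Prop)
  (V : X -> Prop) : Prop :=
  subset V B /\ exists W, O W /\ forall x, V x <-> (B x /\ W x).

Definition clopen {X} (A : X -> Prop) (O : (X -> Prop) -> Prop) (C : X -> Prop) :=
  O C /\ O (fun x => A x /\ ~ C x).

(* C-set: an intersection of clopen subsets of the space (the empty
   intersection being A itself) *)
Definition Cset {X} (A : X -> Prop) (O : (X -> Prop) -> Prop) (S : X -> Prop) :=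
  exists F : (X -> Prop) -> Prop,
    (forall C, F C -> clopen A O C) /\
    (forall x, S x <-> (A x /\ forall C, F C -> C x)).

Definition neighborhood {X} (A : X -> Prop) (O : (X -> Prop) -> Prop)
  (x : X) (N : X -> Prop) :=
  subset N A /\ exists U, O U /\ U x /\ subset U N.

Definition totally_disconnected {X} (A : X -> Prop) (O : (X -> Prop) -> Prop) :=
  forall x, A x -> Cset A O (fun y => y = x).

Definition almost_zero_dimensional {X} (A : X -> Prop) (O : (X -> Prop) -> Prop) :=
  forall x, A x -> forall U, O U -> U x ->
    exists N, neighborhood A O x N /\ Cset A O N /\ subset N U.

Definition cohesive {X} (A : X -> Prop) (O : (X -> Prop) -> Prop) :=
  forall x, A x -> exists N, neighborhood A O x N /\
    forall C, clopen A O C -> (exists y, C y) -> ~ subset C N.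

Definition continuous_on {X Y} (A : X -> Prop) (OA : (X -> Prop) -> Prop)
  (OB : (Y -> Prop) -> Prop) (f : X -> Y) :=
  forall W, OB W -> OA (fun x => A x /\ W (f x)).

Definition Sset (r : R) : Prop :=
  r = 0 \/ exists n : nat, (1 <= n)%nat /\ r = 1 / INR n.

Definition sqsummable (x : nat -> R) : Prop :=
  exists s, infinite_sum (fun i => (x i) ^ 2) s.

(* sum of squares (meaningful when [sqsummable x]) *)
Definition sqnorm (x : nat -> R) : R :=
  epsilon (inhabits 0) (fun s => infinite_sum (fun i => (x i) ^ 2) s).

Definition l2norm (x : nat -> R) : R := sqrt (sqnorm x).

Definition l2dist (x y : nat -> R) : R := l2norm (fun i => x i - y i).

Definition Ec (x : nat -> R) : Prop := (forall i, Sset (x i)) /\ sqsummable x.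

Definition Ec_open (U : (nat -> R) -> Prop) : Prop :=
  subset U Ec /\
  forall x, U x -> exists eps, 0 < eps /\
    forall y, Ec y -> l2dist x y < eps -> U y.

Definition Pcar (p : (nat -> R) * R) : Prop :=
  (forall i, Sset (fst p i)) /\ 0 <= snd p <= 1.

(* product topology: basic neighbourhoods restrict finitely many coordinates *)
Definition P_open (W : (nat -> R) * R -> Prop) : Prop :=
  subset W Pcar /\
  forall p, W p -> exists (n : nat) (eps : R), 0 < eps /\
    forall q, Pcar q ->
      (forall i, (i < n)%nat -> Rabs (fst q i - fst p i) < eps) ->
      Rabs (snd q - snd p) < eps -> W q.

Definition fmap (x : nat -> R) : (nat -> R) * R :=
  (x, (1 + sin (l2norm x)) / 2).

Definition Yset (p : (nat -> R) * R) : Prop := exists x, Ec x /\ fmap x = p.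

Definition Y_open := sub_open P_open Yset.

(* Main.v *)
Require Import Defs.
From Stdlib Require Import Reals ZArith Lra Lia Classical ClassicalEpsilon FunctionalExtensionality.
Open Scope R_scope.

Fixpoint psum (a : nat -> R) (m : nat) : R :=
  match m with O => 0 | S k => psum a k + a k end.

Lemma sum_psum a n : sum_f_R0 a n = psum a (S n).
Proof. induction n; simpl; [lra|]. rewrite IHn; simpl; lra. Qed.

Lemma psum_nonneg a m : (forall i, 0 <= a i) -> 0 <= psum a m.
Proof. intros H; induction m; simpl; [lra|]. specialize (H m); lra. Qed.

Lemma psum_mono a m1 m2 : (forall i, 0 <= a i) -> (m1 <= m2)%nat -> psum a m1 <= psum a m2.
Proof. intros H Hm; induction Hm; simpl; [lra|]. specialize (H m); lra. Qed.

Lemma psum_le a b m : (forall i, a i <= b i) -> psum a m <= psum b m.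
Proof. intros H; induction m; simpl; [lra|]. specialize (H m); lra. Qed.

Lemma psum_ext a b m : (forall i, (i < m)%nat -> a i = b i) -> psum a m = psum b m.
Proof. induction m; intros H; simpl; [lra|]. rewrite IHm by (intros; apply H; lia). rewrite H by lia; lra. Qed.

Lemma psum_plus a b m : psum (fun i => a i + b i) m = psum a m + psum b m.
Proof. induction m; simpl; lra. Qed.

Lemma psum_scal c a m : psum (fun i => c * a i) m = c * psum a m.
Proof. induction m; simpl; lra. Qed.

Definition isum (a : nat -> R) (l : R) : Prop :=
  forall eps, eps > 0 -> exists N, forall n, (n >= N)%nat -> Rabs (psum a n - l) < eps.

Lemma isum_inf a l : isum a l <-> infinite_sum a l.
Proof.
  split; intros H eps He; destruct (H eps He) as [N HN].
  - exists N; intros n Hn; unfold Rdist; rewrite sum_psum; apply HN; lia.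
  - exists (S N); intros n Hn; destruct n; [lia|]. specialize (HN n ltac:(lia)).
    unfold Rdist in HN; rewrite sum_psum in HN; exact HN.
Qed.

Lemma isum_unique a l1 l2 : isum a l1 -> isum a l2 -> l1 = l2.
Proof.
  intros H1 H2. apply isum_inf in H1; apply isum_inf in H2. eapply uniqueness_sum; eauto.
Qed.

Lemma isum_plus a b la lb : isum a la -> isum b lb -> isum (fun i => a i + b i) (la + lb).
Proof.
  intros Ha Hb eps He. destruct (Ha (eps/2) ltac:(lra)) as [N1 H1].
  destruct (Hb (eps/2) ltac:(lra)) as [N2 H2]. exists (N1 + N2)%nat; intros n Hn.
  rewrite psum_plus. specialize (H1 n ltac:(lia)); specialize (H2 n ltac:(lia)).
  apply Rabs_def2 in H1; apply Rabs_def2 in H2. apply Rabs_def1; lra.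
Qed.

Lemma isum_scal c a l : isum a l -> isum (fun i => c * a i) (c * l).
Proof.
  intros Ha eps He. destruct (Ha (eps / (Rabs c + 1))) as [N H].
  { apply Rdiv_lt_0_compat; [lra|]. pose proof (Rabs_pos c); lra. }
  exists N; intros n Hn. rewrite psum_scal. specialize (H n Hn).
  replace (c * psum a n - c * l) with (c * (psum a n - l)) by ring.
  rewrite Rabs_mult. pose proof (Rabs_pos c). pose proof (Rabs_pos (psum a n - l)).
  assert (Rabs c * Rabs (psum a n - l) <= Rabs c * (eps / (Rabs c + 1))).
  { apply Rmult_le_compat_l; lra. }
  assert (Rabs c * (eps / (Rabs c + 1)) < eps).
  { apply (Rmult_lt_reg_r (Rabs c + 1)); [lra|]. unfold Rdiv. rewrite !Rmult_assoc, Rinv_l by lra. nra. }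
  lra.
Qed.

Lemma isum_ext a b l : (forall i, a i = b i) -> isum a l -> isum b l.
Proof. intros E; replace b with a by (apply functional_extensionality; auto); auto. Qed.

Lemma isum_le a b la lb : (forall i, a i <= b i) -> isum a la -> isum b lb -> la <= lb.
Proof.
  intros H Ha Hb. apply Rnot_lt_le; intros Hlt.
  destruct (Ha ((la - lb)/2) ltac:(lra)) as [N1 H1].
  destruct (Hb ((la - lb)/2) ltac:(lra)) as [N2 H2].
  specialize (H1 (N1+N2)%nat ltac:(lia)); specialize (H2 (N1+N2)%nat ltac:(lia)).
  pose proof (psum_le a b (N1+N2) H).
  apply Rabs_def2 in H1; apply Rabs_def2 in H2; lra.
Qed.

Lemma isum_nonneg a l : (forall i, 0 <= a i) -> isum a l -> 0 <= l.
Proof.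
  intros H Ha. apply (isum_le (fun _ => 0) a); auto.
  intros eps He; exists O; intros n _. replace (psum (fun _ => 0) n) with 0.
  rewrite Rminus_0_r, Rabs_R0; lra. induction n; simpl; lra.
Qed.

Lemma isum_zero : isum (fun _ => 0) 0.
Proof.
  intros eps He; exists O; intros n _. replace (psum (fun _ => 0) n) with 0.
  rewrite Rminus_0_r, Rabs_R0; lra. induction n; simpl; lra.
Qed.

Lemma psum_le_isum a l m : (forall i, 0 <= a i) -> isum a l -> psum a m <= l.
Proof.
  intros H Ha. apply Rnot_lt_le; intros Hlt.
  destruct (Ha (psum a m - l) ltac:(lra)) as [N H1].
  specialize (H1 (m + N)%nat ltac:(lia)). pose proof (psum_mono a m (m+N) H ltac:(lia)).
  apply Rabs_def2 in H1; lra.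
Qed.

Lemma isum_finite a m : (forall i, (i >= m)%nat -> a i = 0) -> isum a (psum a m).
Proof.
  intros H eps He; exists m; intros n Hn. replace (psum a n) with (psum a m).
  rewrite Rminus_diag, Rabs_R0; lra.
  induction Hn; auto. simpl. rewrite H by lia. lra.
Qed.

Lemma isum_bounded a B : (forall i, 0 <= a i) -> (forall m, psum a m <= B) -> exists l, isum a l.
Proof.
  intros H HB. destruct (growing_cv (fun n => psum a n)) as [l Hl].
  - intros n; simpl; specialize (H n); lra.
  - exists B; intros x [n ->]; auto.
  - exists l; intros eps He; destruct (Hl eps He) as [N HN]; exists N; intros n Hn; apply HN; auto.
Qed.

Lemma isum_comp a b lb : (forall i, 0 <= a i <= b i) -> isum b lb -> exists la, isum a la.
Proof.
  intros H Hb. apply (isum_bounded a lb). intros i; apply H.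
  intros m. apply Rle_trans with (psum b m). apply psum_le; intros; apply H.
  apply psum_le_isum; auto. intros i; specialize (H i); lra.
Qed.

Lemma isum_term a l i : (forall j, 0 <= a j) -> isum a l -> a i <= l.
Proof.
  intros H Ha. apply Rle_trans with (psum a (S i)). simpl. pose proof (psum_nonneg a i H); lra.
  apply psum_le_isum; auto.
Qed.

Lemma isum_tail a l : (forall i, 0 <= a i) -> isum a l ->
  forall eps, eps > 0 -> exists m, forall b lb, (forall i, 0 <= b i <= a i) ->
    (forall i, (i < m)%nat -> b i = 0) -> isum b lb -> lb <= eps.
Proof.
  intros H Ha eps He. destruct (Ha eps He) as [m Hm]. exists m. intros b lb Hb Hz Hlb.
  specialize (Hm m ltac:(lia)). apply Rabs_def2 in Hm.
  set (c := fun i => if Nat.ltb i m then a i else 0).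
  assert (Hc : isum c (psum a m)).
  { replace (psum a m) with (psum c m). apply isum_finite. intros i Hi; unfold c.
    destruct (Nat.ltb_spec i m); [lia|auto].
    apply psum_ext; intros i Hi; unfold c; destruct (Nat.ltb_spec i m); [auto|lia]. }
  pose proof (isum_plus _ _ _ _ Hlb Hc) as Hs.
  assert (lb + psum a m <= l).
  { apply (isum_le (fun i => b i + c i) a _ _); auto. intros i; unfold c. destruct (Nat.ltb_spec i m).
    rewrite Hz by auto; lra. specialize (Hb i); lra. }
  lra.
Qed.

Lemma isum_terms0 a l : isum a l -> forall eps, eps > 0 -> exists N, forall n, (n >= N)%nat -> Rabs (a n) < eps.
Proof.
  intros Ha eps He. destruct (Ha (eps/2) ltac:(lra)) as [N HN]. exists N; intros n Hn.
  pose proof (HN n Hn); pose proof (HN (S n) ltac:(lia)). simpl in *.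
  apply Rabs_def2 in H; apply Rabs_def2 in H0; apply Rabs_def1; lra.
Qed.

Lemma sqs_isum x : sqsummable x <-> exists s, isum (fun i => x i ^ 2) s.
Proof. split; intros [s H]; exists s; apply isum_inf; auto. Qed.

Lemma sqnorm_spec x : sqsummable x -> isum (fun i => x i ^ 2) (sqnorm x).
Proof.
  intros H. apply isum_inf. unfold sqnorm. apply epsilon_spec. exact H.
Qed.

Lemma sqnorm_eq x s : isum (fun i => x i ^ 2) s -> sqnorm x = s.
Proof.
  intros H. eapply isum_unique; [|exact H]. apply sqnorm_spec. exists s; apply isum_inf; auto.
Qed.

Lemma sqnorm_nonneg x : sqsummable x -> 0 <= sqnorm x.
Proof. intros H. eapply isum_nonneg; [|apply sqnorm_spec; auto]. intros i; simpl; nra. Qed.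

Lemma sqs_comb x y a b : sqsummable x -> sqsummable y -> sqsummable (fun i => a * x i + b * y i).
Proof.
  intros Hx Hy. apply sqs_isum.
  pose proof (isum_plus _ _ _ _ (isum_scal (2*a^2) _ _ (sqnorm_spec x Hx))
                                  (isum_scal (2*b^2) _ _ (sqnorm_spec y Hy))) as H.
  eapply isum_comp; [|exact H]. intros i. split; [apply pow2_ge_0|].
  pose proof (pow2_ge_0 (a * x i - b * y i)).
  assert ((a * x i + b * y i) ^ 2 + (a * x i - b * y i) ^ 2 = 2 * a ^ 2 * x i ^ 2 + 2 * b ^ 2 * y i ^ 2) by ring.
  lra.
Qed.

Lemma sqs_sub x y : sqsummable x -> sqsummable y -> sqsummable (fun i => x i - y i).
Proof.
  intros Hx Hy. pose proof (sqs_comb x y 1 (-1) Hx Hy).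
  replace (fun i => x i - y i) with (fun i => 1 * x i + -1 * y i); auto.
  apply functional_extensionality; intros; ring.
Qed.

Lemma sqs_add x y : sqsummable x -> sqsummable y -> sqsummable (fun i => x i + y i).
Proof.
  intros Hx Hy. pose proof (sqs_comb x y 1 1 Hx Hy).
  replace (fun i => x i + y i) with (fun i => 1 * x i + 1 * y i); auto.
  apply functional_extensionality; intros; ring.
Qed.

Lemma sq_ineq_real A a b : 0 <= a -> 0 <= b ->
  (forall t, t > 0 -> A <= (1 + t) * a + (1 + / t) * b) -> A <= (sqrt a + sqrt b) ^ 2.
Proof.
  intros Ha Hb H. pose proof (sqrt_sqrt a Ha); pose proof (sqrt_sqrt b Hb).
  pose proof (sqrt_pos a); pose proof (sqrt_pos b).
  destruct (Req_dec a 0) as [Ea|Ea]; [|destruct (Req_dec b 0) as [Eb|Eb]].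
  - subst a. rewrite sqrt_0. apply Rnot_lt_le; intros Hlt.
    assert (Hb' : b < A) by (simpl in Hlt; nra).
    destruct (Req_dec b 0) as [Eb|Eb].
    + subst b. specialize (H 1 ltac:(lra)). lra.
    + specialize (H (2 * b / (A - b))). assert (Hp : 2 * b / (A - b) > 0).
      { apply Rdiv_lt_0_compat; lra. }
      specialize (H Hp). replace (/ (2 * b / (A - b))) with ((A - b) / (2 * b)) in H
        by (field; lra). replace ((1 + (A - b) / (2 * b)) * b) with (b + (A - b)/2) in H
        by (field; lra). lra.
  - subst b. rewrite sqrt_0. apply Rnot_lt_le; intros Hlt.
    assert (Ha' : a < A) by (simpl in Hlt; nra).
    specialize (H ((A - a) / (2 * a))). assert (Hp : (A - a) / (2 * a) > 0).
    { apply Rdiv_lt_0_compat; lra. }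
    specialize (H Hp). replace ((1 + (A - a) / (2 * a)) * a) with (a + (A - a)/2) in H
        by (field; lra). lra.
  - assert (sqrt a > 0). { destruct H2; auto. exfalso; apply Ea; rewrite <- H0, <- H2; ring. }
    assert (sqrt b > 0). { destruct H3; auto. exfalso; apply Eb; rewrite <- H1, <- H3; ring. }
    specialize (H (sqrt b / sqrt a) ltac:(apply Rdiv_lt_0_compat; lra)).
    remember (sqrt a) as sa; remember (sqrt b) as sb. rewrite <- H0, <- H1 in H.
    replace ((1 + / (sb / sa)) * (sb * sb)) with (sb*sb + sa * sb) in H by (field; lra).
    replace ((1 + sb / sa) * (sa * sa)) with (sa * sa + sa * sb) in H by (field; lra).
    simpl. replace ((sa + sb) * ((sa + sb) * 1)) with (sa * sa + sa * sb + (sb * sb + sa * sb)) by ring. exact H.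
Qed.

Lemma minkowski x d : sqsummable x -> sqsummable d ->
  l2norm (fun i => x i + d i) <= l2norm x + l2norm d.
Proof.
  intros Hx Hd. unfold l2norm. pose proof (sqs_add x d Hx Hd) as Hs.
  pose proof (sqnorm_nonneg _ Hs). pose proof (sqnorm_nonneg _ Hx). pose proof (sqnorm_nonneg _ Hd).
  assert (sqnorm (fun i => x i + d i) <= (sqrt (sqnorm x) + sqrt (sqnorm d)) ^ 2).
  { apply sq_ineq_real; auto. intros t Ht.
    pose proof (isum_plus _ _ _ _ (isum_scal (1+t) _ _ (sqnorm_spec x Hx))
                                  (isum_scal (1 + /t) _ _ (sqnorm_spec d Hd))) as H3.
    eapply isum_le; [|apply (sqnorm_spec _ Hs)|exact H3]. intros i; simpl.
    pose proof (pow2_ge_0 (t * x i - d i)).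
    assert (2 * x i * d i <= t * x i ^ 2 + / t * d i ^ 2).
    { apply (Rmult_le_reg_l t); auto. replace (t * (t * x i ^ 2 + / t * d i ^ 2)) with
        (t*t * x i ^2 + d i ^2) by (field; lra). simpl in *; nra. }
    simpl in *; nra. }
  rewrite <- (sqrt_pow2 (sqrt (sqnorm x) + sqrt (sqnorm d))).
  apply sqrt_le_1_alt. auto. pose proof (sqrt_pos (sqnorm x)); pose proof (sqrt_pos (sqnorm d)); lra.
Qed.

Lemma l2norm_nonneg x : 0 <= l2norm x.
Proof. apply sqrt_pos. Qed.

Lemma sqnorm_ext x y : (forall i, x i ^ 2 = y i ^ 2) -> sqnorm x = sqnorm y.
Proof.
  intros H. unfold sqnorm. replace (fun i => x i ^ 2) with (fun i => y i ^ 2); auto.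
  apply functional_extensionality; intros; auto.
Qed.

Lemma l2norm_ext x y : (forall i, x i ^ 2 = y i ^ 2) -> l2norm x = l2norm y.
Proof. intros H; unfold l2norm; rewrite (sqnorm_ext x y H); auto. Qed.

Lemma l2dist_sym x y : l2dist x y = l2dist y x.
Proof. unfold l2dist; apply l2norm_ext; intros; ring. Qed.

Lemma l2dist_tri x y z : sqsummable x -> sqsummable y -> sqsummable z ->
  l2dist x z <= l2dist x y + l2dist y z.
Proof.
  intros Hx Hy Hz. unfold l2dist.
  rewrite (l2norm_ext (fun i => x i - z i) (fun i => (x i - y i) + (y i - z i))) by (intros; ring).
  apply minkowski; apply sqs_sub; auto.
Qed.

Lemma norm_rev x y : sqsummable x -> sqsummable y -> Rabs (l2norm x - l2norm y) <= l2dist x y.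
Proof.
  intros Hx Hy. pose proof (minkowski (fun i => x i - y i) y (sqs_sub x y Hx Hy) Hy).
  pose proof (minkowski (fun i => y i - x i) x (sqs_sub y x Hy Hx) Hx).
  rewrite (l2norm_ext _ x) in H by (intros; ring).
  rewrite (l2norm_ext _ y) in H0 by (intros; ring).
  fold (l2dist x y) in H. fold (l2dist y x) in H0. rewrite l2dist_sym in H0.
  apply Rabs_le; lra.
Qed.

Lemma sqrt_sq_abs r : sqrt (r ^ 2) = Rabs r.
Proof. rewrite <- sqrt_Rsqr_abs. f_equal. unfold Rsqr; ring. Qed.

Lemma coord_le x y i : sqsummable x -> sqsummable y -> Rabs (x i - y i) <= l2dist x y.
Proof.
  intros Hx Hy. unfold l2dist, l2norm. rewrite <- sqrt_sq_abs. apply sqrt_le_1_alt.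
  apply (isum_term (fun i => (x i - y i) ^ 2)). intros; apply pow2_ge_0.
  apply sqnorm_spec, sqs_sub; auto.
Qed.

Lemma sqnorm_finite x m : (forall i, (i >= m)%nat -> x i = 0) ->
  sqrt 0 = 0 /\ isum (fun i => x i ^ 2) (psum (fun i => x i ^ 2) m).
Proof.
  intros H. split. apply sqrt_0. apply isum_finite. intros i Hi; rewrite H; auto; ring.
Qed.

Lemma sqs_finite x m : (forall i, (i >= m)%nat -> x i = 0) -> sqsummable x.
Proof. intros H; apply sqs_isum; eexists; apply (sqnorm_finite x m H). Qed.

Lemma sqnorm_finite_eq x m : (forall i, (i >= m)%nat -> x i = 0) ->
  sqnorm x = psum (fun i => x i ^ 2) m.
Proof. intros H; apply sqnorm_eq; apply (sqnorm_finite x m H). Qed.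

Definition upd (X : nat -> R) (j : nat) (c : R) : nat -> R :=
  fun i => if Nat.eq_dec i j then c else X i.

Definition single (j : nat) (v : R) : nat -> R :=
  fun i => if Nat.eq_dec i j then v else 0.

Lemma psum_zero m : psum (fun _ => 0) m = 0.
Proof. induction m; simpl; lra. Qed.

Lemma isum_single j v : isum (single j v) v.
Proof.
  assert (E : psum (single j v) (S j) = v).
  { simpl. rewrite (psum_ext _ (fun _ => 0)). 2:{ intros i Hi; unfold single;
      destruct (Nat.eq_dec i j); [lia|auto]. }
    unfold single; destruct (Nat.eq_dec j j); [|lia].
    rewrite psum_zero; ring. }
  rewrite <- E at 2. apply isum_finite. intros i Hi; unfold single; destruct (Nat.eq_dec i j); [lia|auto].
Qed.

Lemma sqs_single j v : sqsummable (single j v).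
Proof. apply (sqs_finite _ (S j)); intros i Hi; unfold single; destruct (Nat.eq_dec i j); [lia|auto]. Qed.

Lemma sqnorm_single j v : sqnorm (single j v) = v ^ 2.
Proof.
  apply sqnorm_eq. eapply isum_ext; [|apply (isum_single j (v^2))].
  intros i; unfold single; destruct (Nat.eq_dec i j); simpl; ring.
Qed.

Lemma l2norm_single j v : l2norm (single j v) = Rabs v.
Proof. unfold l2norm; rewrite sqnorm_single; apply sqrt_sq_abs. Qed.

Lemma upd_as_sum X j c : X j = 0 -> upd X j c = (fun i => X i + single j c i).
Proof.
  intros H; apply functional_extensionality; intros i; unfold upd, single.
  destruct (Nat.eq_dec i j); [subst; rewrite H|]; ring.
Qed.

Lemma sqs_upd X j c : sqsummable X -> sqsummable (upd X j c).
Proof.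
  intros H. assert (upd X j c = fun i => upd X j 0 i + single j c i).
  { apply functional_extensionality; intros i; unfold upd, single; destruct (Nat.eq_dec i j); ring. }
  rewrite H0. apply sqs_add; [|apply sqs_single].
  assert (upd X j 0 = fun i => 1 * X i + (-1) * single j (X j) i).
  { apply functional_extensionality; intros i; unfold upd, single; destruct (Nat.eq_dec i j); [subst|]; ring. }
  rewrite H1; apply sqs_comb; auto; apply sqs_single.
Qed.

Lemma sqnorm_upd X j c : sqsummable X -> X j = 0 -> sqnorm (upd X j c) = sqnorm X + c ^ 2.
Proof.
  intros H Hj. apply sqnorm_eq. rewrite upd_as_sum by auto.
  eapply isum_ext; [|apply (isum_plus _ _ _ _ (sqnorm_spec X H) (isum_single j (c^2)))].
  intros i; unfold single; destruct (Nat.eq_dec i j); [subst; rewrite Hj|]; ring.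
Qed.

Lemma l2dist_upd X j a b : l2dist (upd X j a) (upd X j b) = Rabs (a - b).
Proof.
  unfold l2dist. rewrite <- (l2norm_single j (a - b)). apply l2norm_ext.
  intros i; unfold upd, single; destruct (Nat.eq_dec i j); ring.
Qed.

Lemma upd_0 X j : X j = 0 -> upd X j 0 = X.
Proof. intros H; apply functional_extensionality; intros i; unfold upd; destruct (Nat.eq_dec i j); subst; auto. Qed.

Definition trunc (m : nat) (x : nat -> R) : nat -> R :=
  fun i => if Nat.ltb i m then x i else 0.

Lemma trunc_zero m x i : (i >= m)%nat -> trunc m x i = 0.
Proof. intros H; unfold trunc; destruct (Nat.ltb_spec i m); [lia|auto]. Qed.

Lemma sqnorm_trunc m x : sqnorm (trunc m x) = psum (fun i => x i ^ 2) m.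
Proof.
  rewrite (sqnorm_finite_eq _ m) by (intros; apply trunc_zero; auto).
  apply psum_ext; intros i Hi; unfold trunc; destruct (Nat.ltb_spec i m); [auto|lia].
Qed.

Lemma sqnorm_trunc_le m x : sqsummable x -> sqnorm (trunc m x) <= sqnorm x.
Proof.
  intros H; rewrite sqnorm_trunc. apply psum_le_isum. intros; apply pow2_ge_0. apply sqnorm_spec; auto.
Qed.

Lemma trunc_close x : sqsummable x -> forall eps, eps > 0 -> exists m,
  forall m', (m' >= m)%nat -> l2dist (trunc m' x) x < eps.
Proof.
  intros H eps He. destruct (isum_tail _ _ (fun i => pow2_ge_0 (x i)) (sqnorm_spec x H) (eps^2/2))
    as [m Hm]. { apply Rdiv_lt_0_compat; [apply pow_lt|]; lra. }
  exists m; intros m' Hm'. set (d := fun i => trunc m' x i - x i).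
  assert (Hd : sqsummable d) by (apply sqs_sub; auto; apply (sqs_finite _ m'); intros; apply trunc_zero; auto).
  assert (sqnorm d <= eps^2/2).
  { apply (Hm (fun i => d i ^ 2)); [| |apply sqnorm_spec; auto].
    - intros i; unfold d, trunc; destruct (Nat.ltb_spec i m'); split; try apply pow2_ge_0.
      replace (x i - x i) with 0 by ring; simpl; nra. right; ring.
    - intros i Hi; unfold d, trunc; destruct (Nat.ltb_spec i m'); [ring|lia]. }
  unfold l2dist, l2norm. fold d. rewrite <- (sqrt_pow2 eps) by lra. apply sqrt_lt_1_alt.
  split. apply sqnorm_nonneg; auto. assert (0 < eps ^2) by (apply pow_lt; lra). lra.
Qed.

Definition Dn (n : nat) (y : nat -> R) : Prop := Ec y /\ forall i, (i < n)%nat -> y i = 0.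

Definition ropen (n : nat) (U : (nat -> R) -> Prop) : Prop :=
  forall y, U y -> exists eps, eps > 0 /\ forall z, Dn n z -> l2dist y z < eps -> U z.

Lemma least_nat (P : nat -> Prop) : (exists n, P n) -> exists n, P n /\ forall m, (m < n)%nat -> ~ P m.
Proof.
  intros [n Hn]. revert Hn. induction n as [n IH] using (well_founded_induction Wf_nat.lt_wf).
  intros Hn. destruct (classic (exists m, (m < n)%nat /\ P m)) as [[m [Hm HPm]]|Hno].
  - apply (IH m Hm HPm).
  - exists n; split; auto. intros m Hm HP; apply Hno; eauto.
Qed.

Lemma INR_ge1 N : (1 <= N)%nat -> 1 <= INR N.
Proof. intros H; apply le_INR in H; simpl in H; lra. Qed.

Lemma Sset_inv N : (1 <= N)%nat -> Sset (1 / INR N).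
Proof. intros H; right; exists N; auto. Qed.

Lemma Sset_0 : Sset 0.
Proof. left; auto. Qed.

Lemma Dn_upd n X j c : Dn n X -> Sset c -> (j >= n)%nat -> Dn n (upd X j c).
Proof.
  intros [[HS Hs] Hz] Hc Hj. split; [split|].
  - intros i; unfold upd; destruct (Nat.eq_dec i j); auto.
  - apply sqs_upd; auto.
  - intros i Hi; unfold upd; destruct (Nat.eq_dec i j); [lia|auto].
Qed.

Lemma Dn_trunc n m x : Dn n x -> Dn n (trunc m x).
Proof.
  intros [[HS Hs] Hz]. split; [split|].
  - intros i; unfold trunc; destruct (Nat.ltb i m); auto. apply Sset_0.
  - apply (sqs_finite _ m); intros; apply trunc_zero; auto.
  - intros i Hi; unfold trunc; destruct (Nat.ltb i m); auto.
Qed.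

Lemma Dn_sqs n x : Dn n x -> sqsummable x.
Proof. intros [[_ H] _]; auto. Qed.

Lemma isum_le_bound a l B : isum a l -> (forall m, psum a m <= B) -> l <= B.
Proof.
  intros Ha HB. apply Rnot_lt_le; intros Hlt. destruct (Ha (l - B) ltac:(lra)) as [N HN].
  specialize (HN N ltac:(lia)); specialize (HB N). apply Rabs_def2 in HN; lra.
Qed.

Section Erdos.

Definition spec (U : (nat -> R) -> Prop) (T : R) (X : nat -> R) (j N : nat) : Prop :=
  (1 <= N)%nat /\ (1 / INR N) ^ 2 <= T ^ 2 - sqnorm X /\ U (upd X j (1 / INR N)) /\
  (N = 1%nat \/ ((2 <= N)%nat /\ ~ U (upd X j (1 / INR (N - 1)))) \/
   ((2 <= N)%nat /\ T ^ 2 - sqnorm X < (1 / INR (N - 1)) ^ 2)).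

Lemma step_exists n U T X j : (forall y, U y -> Dn n y) -> ropen n U ->
  U X -> sqnorm X < T ^ 2 -> X j = 0 -> (j >= n)%nat -> exists N, spec U T X j N.
Proof.
  intros HUD HU HX Hg Hj Hjn. destruct (HU X HX) as [eps [He Heps]].
  set (g := T ^ 2 - sqnorm X). assert (Hg0 : g > 0) by (unfold g; lra).
  destruct (archimed (1/eps + 1/g)) as [Ha _].
  assert (Hp : 0 < 1/eps + 1/g).
  { assert (0 < 1/eps) by (apply Rdiv_lt_0_compat; lra). assert (0 < 1/g) by (apply Rdiv_lt_0_compat; lra). lra. }
  set (m0 := Z.to_nat (up (1/eps + 1/g))).
  assert (Hm0 : INR m0 > 1/eps + 1/g).
  { unfold m0. rewrite INR_IZR_INZ, Z2Nat.id; auto. apply le_IZR. lra. }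
  assert (Hm0' : (1 <= m0)%nat).
  { destruct m0; [simpl in Hm0; lra|lia]. }
  set (P := fun N => (1 <= N)%nat /\ (1 / INR N) ^ 2 <= g /\ forall m, (m >= N)%nat -> U (upd X j (1 / INR m))).
  assert (HPm0 : P m0).
  { assert (H1 : 1 <= INR m0) by (apply INR_ge1; auto).
    assert (Hinv : 1 / INR m0 < eps /\ 1 / INR m0 < g).
    { assert (1/eps < INR m0) by (pose proof (Rdiv_lt_0_compat 1 g ltac:(lra) Hg0); lra).
      assert (1/g < INR m0) by (pose proof (Rdiv_lt_0_compat 1 eps ltac:(lra) He); lra).
      split.
      - apply (Rmult_lt_reg_r (INR m0)); [lra|]. unfold Rdiv in *. rewrite Rmult_1_l, Rinv_l by lra.
        apply (Rmult_lt_reg_l (/eps)). apply Rinv_0_lt_compat; lra.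
        rewrite <- Rmult_assoc, Rinv_l by lra. lra.
      - apply (Rmult_lt_reg_r (INR m0)); [lra|]. unfold Rdiv in *. rewrite Rmult_1_l, Rinv_l by lra.
        apply (Rmult_lt_reg_l (/g)). apply Rinv_0_lt_compat; lra.
        rewrite <- Rmult_assoc, Rinv_l by lra. lra. }
    split; [auto|split].
    - assert (0 < 1 / INR m0) by (apply Rdiv_lt_0_compat; lra).
      assert (1 / INR m0 <= 1). { unfold Rdiv; rewrite Rmult_1_l. rewrite <- Rinv_1. apply Rinv_le_contravar; lra. }
      simpl; nra.
    - intros m Hm. apply (Heps (upd X j (1 / INR m))).
      + apply Dn_upd; auto. apply Sset_inv; lia.
      + rewrite <- (upd_0 X j Hj) at 1. rewrite l2dist_upd.
        assert (1 <= INR m) by (apply INR_ge1; lia). assert (INR m0 <= INR m) by (apply le_INR; lia).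
        assert (0 < 1 / INR m) by (apply Rdiv_lt_0_compat; lra).
        assert (1 / INR m <= 1 / INR m0).
        { unfold Rdiv; rewrite !Rmult_1_l; apply Rinv_le_contravar; lra. }
        rewrite Rminus_0_l, Rabs_Ropp, Rabs_right by lra. lra. }
  destruct (least_nat P (ex_intro _ m0 HPm0)) as [N [[HN1 [HN2 HN3]] HNmin]].
  exists N. split; [auto|split; [auto|split; [apply HN3; lia|]]].
  destruct (Nat.eq_dec N 1) as [E|E]; [left; auto|right].
  assert (HN : (2 <= N)%nat) by lia. specialize (HNmin (N - 1)%nat ltac:(lia)).
  destruct (Rlt_or_le g ((1 / INR (N - 1)) ^ 2)) as [Hlt|Hle]; [right; split; auto|left; split; auto].
  intros HU'. apply HNmin. split; [lia|split; auto].
  intros m Hm. destruct (Nat.eq_dec m (N-1)) as [->|Hne]; auto. apply HN3; lia.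
Qed.

End Erdos.

Definition nxt U T X j : nat := epsilon (inhabits 1%nat) (spec U T X j).

Fixpoint st U T (x0 : nat -> R) (K k : nat) : nat -> R :=
  match k with
  | O => x0
  | S k' => upd (st U T x0 K k') (K + k') (1 / INR (nxt U T (st U T x0 K k') (K + k')))
  end.

Lemma core n U T x0 K : (forall y, U y -> Dn n y) -> ropen n U ->
  ropen n (fun y => Dn n y /\ ~ U y) -> U x0 -> sqnorm x0 < T ^ 2 ->
  (forall i, (i >= K)%nat -> x0 i = 0) -> (K >= n)%nat ->
  (forall y, U y -> sqnorm y <> T ^ 2) -> False.
Proof.
  intros HUD HU HUc Hx0 Hs0 Hz0 HKn HT.
  set (X := st U T x0 K). set (N := fun k => nxt U T (X k) (K + k)).
  assert (Inv : forall k, (U (X k) /\ sqnorm (X k) < T ^ 2 /\ forall i, (i >= K + k)%nat -> X k i = 0)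
                        /\ spec U T (X k) (K + k) (N k)).
  { induction k as [|k [[IU [IS IZ]] Isp]].
    - assert (I0 : U (X O) /\ sqnorm (X O) < T ^ 2 /\ forall i, (i >= K + 0)%nat -> X O i = 0).
      { simpl; split; [auto|split; [auto|]]. intros i Hi; apply Hz0; lia. }
      split; auto. unfold N, nxt. apply epsilon_spec.
      destruct I0 as [A1 [A2 A3]]. apply (step_exists n); auto; try (apply A3; lia); lia.
    - assert (EX : X (S k) = upd (X k) (K + k) (1 / INR (N k))) by reflexivity.
      destruct Isp as [Sp1 [Sp2 [Sp3 Sp4]]].
      assert (I1 : U (X (S k)) /\ sqnorm (X (S k)) < T ^ 2 /\ forall i, (i >= K + S k)%nat -> X (S k) i = 0).
      { rewrite EX. split; [auto|split].
        - pose proof (HT _ Sp3). rewrite sqnorm_upd in * by (auto; try apply (Dn_sqs n), HUD, IU; apply IZ; lia).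
          lra.
        - intros i Hi; unfold upd; destruct (Nat.eq_dec i (K + k)); [lia|]. apply IZ; lia. }
      split; auto. unfold N, nxt. apply epsilon_spec.
      destruct I1 as [A1 [A2 A3]]. apply (step_exists n); auto; try (apply A3; lia); lia. }
  set (c := fun k => 1 / INR (N k)).
  set (Xinf := fun i => if Nat.ltb i K then x0 i else c (i - K)%nat).
  assert (HXt : forall k, X k = trunc (K + k) Xinf).
  { induction k.
    - apply functional_extensionality; intros i. unfold trunc, Xinf. simpl.
      destruct (Nat.ltb_spec i K); destruct (Nat.ltb_spec i (K + 0)); try lia; auto; symmetry; apply Hz0; lia.
    - change (X (S k)) with (upd (X k) (K + k) (c k)). rewrite IHk.
      apply functional_extensionality; intros i. unfold trunc, upd, Xinf.
      destruct (Nat.eq_dec i (K + k)) as [->|Hne].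
      + destruct (Nat.ltb_spec (K + k) K); [lia|]. destruct (Nat.ltb_spec (K + k) (K + S k)); [|lia].
        f_equal; lia.
      + destruct (Nat.ltb_spec i (K + k)); destruct (Nat.ltb_spec i (K + S k)); auto; lia. }
  assert (HNge : forall k, (1 <= N k)%nat) by (intros k; apply (Inv k)).
  assert (HXs : forall m, psum (fun i => Xinf i ^ 2) m <= T ^ 2).
  { intros m. apply Rle_trans with (psum (fun i => Xinf i ^ 2) (K + m)).
    apply psum_mono; [intros; apply pow2_ge_0|lia].
    rewrite <- sqnorm_trunc, <- HXt. left; apply (Inv m). }
  destruct (isum_bounded _ _ (fun i => pow2_ge_0 (Xinf i)) HXs) as [l Hl].
  assert (HDinf : Dn n Xinf).
  { split; [split|].
    - intros i; unfold Xinf; destruct (Nat.ltb_spec i K).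
      + destruct (HUD x0 Hx0) as [[HS _] _]; auto.
      + unfold c; apply Sset_inv; auto.
    - apply sqs_isum; exists l; auto.
    - intros i Hi; unfold Xinf; destruct (Nat.ltb_spec i K); [|lia].
      destruct (HUD x0 Hx0) as [_ Hz]; auto. }
  assert (Hsqinf : sqsummable Xinf) by (apply (Dn_sqs n); auto).
  assert (Hl' : sqnorm Xinf = l) by (apply sqnorm_eq; auto).
  assert (Hlub : l <= T ^ 2) by (apply (isum_le_bound _ _ _ Hl HXs)).
  assert (HinU : U Xinf).
  { apply NNPP; intros Hn. destruct (HUc Xinf (conj HDinf Hn)) as [eps [He Heps]].
    destruct (trunc_close Xinf Hsqinf eps He) as [m Hm].
    assert (HXm : Dn n (X m) /\ ~ U (X m)).
    { apply Heps. apply HUD, (Inv m). rewrite HXt, l2dist_sym. apply Hm; lia. }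
    apply HXm, (Inv m). }
  assert (Hc0 : forall eps, eps > 0 -> exists k0, forall k, (k >= k0)%nat -> c k ^ 2 < eps).
  { intros eps He. destruct (isum_terms0 _ _ Hl eps He) as [N0 HN0]. exists N0; intros k Hk.
    specialize (HN0 (K + k)%nat ltac:(lia)). rewrite Rabs_right in HN0 by (apply Rle_ge, pow2_ge_0).
    unfold Xinf in HN0. destruct (Nat.ltb_spec (K + k) K); [lia|]. replace (K + k - K)%nat with k in HN0 by lia.
    auto. }
  assert (Hcpos : forall k, 0 < c k).
  { intros k; unfold c; apply Rdiv_lt_0_compat; [lra|]. pose proof (INR_ge1 _ (HNge k)); lra. }
  destruct (classic (forall k0, exists k, (k >= k0)%nat /\ (2 <= N k)%nat /\
              ~ U (upd (X k) (K + k) (1 / INR (N k - 1))))) as [HA|HB].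
  -
    destruct (HU Xinf HinU) as [eps [He Heps]].
    destruct (trunc_close Xinf Hsqinf (eps/2) ltac:(lra)) as [m Hm].
    destruct (Hc0 ((eps/2)^2) ltac:(apply pow_lt; lra)) as [k1 Hk1].
    destruct (HA (m + k1)%nat) as [k [Hk [HN2 HnU]]].
    apply HnU. apply Heps.
    + apply Dn_upd; [apply HUD, (Inv k)| |lia]. apply Sset_inv; lia.
    + apply Rle_lt_trans with (l2dist Xinf (X (S k)) + l2dist (X (S k)) (upd (X k) (K + k) (1 / INR (N k - 1)))).
      * apply l2dist_tri; auto. apply (Dn_sqs n), HUD, (Inv (S k)).
        apply sqs_upd, (Dn_sqs n), HUD, (Inv k).
      * assert (H1 : l2dist Xinf (X (S k)) < eps / 2) by (rewrite HXt, l2dist_sym; apply Hm; lia).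
        change (X (S k)) with (upd (X k) (K + k) (c k)) in H1 |- *. rewrite l2dist_upd.
        specialize (Hk1 k ltac:(lia)). pose proof (Hcpos k).
        assert (Hck : c k < eps / 2) by (apply Rnot_le_lt; intros Hle; simpl in Hk1; nra).
        assert (E : INR (N k - 1) = INR (N k) - 1) by (rewrite minus_INR by lia; simpl; ring).
        assert (2 <= INR (N k)) by (apply le_INR in HN2; simpl in HN2; lra).
        unfold c in *. rewrite E. rewrite Rabs_left1.
        2:{ apply Rle_minus. unfold Rdiv; rewrite !Rmult_1_l. apply Rinv_le_contravar; lra. }
        assert (- (1 / INR (N k) - 1 / (INR (N k) - 1)) <= 1 / INR (N k)).
        { assert (1 / (INR (N k) - 1) <= 2 / INR (N k)).
          { apply (Rmult_le_reg_r (INR (N k) * (INR (N k) - 1))). nra.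
            field_simplify; try lra. }
          lra. }
        lra.
  -
    apply not_all_ex_not in HB. destruct HB as [k0 Hk0].
    apply (HT Xinf HinU). rewrite Hl'. apply Rle_antisym; auto.
    apply Rnot_lt_le; intros Hlt. set (eps := T ^ 2 - l). assert (Heps0 : eps > 0) by (unfold eps; lra).
    destruct (Hc0 (Rmin (1/4) (eps/4)) ltac:(apply Rmin_glb_lt; lra)) as [k1 Hk1].
    set (k := (k0 + k1)%nat). specialize (Hk1 k ltac:(unfold k; lia)).
    pose proof (Rmin_l (1/4) (eps/4)); pose proof (Rmin_r (1/4) (eps/4)).
    pose proof (Hcpos k).
    assert (Hck : c k < 1/2) by (apply Rnot_le_lt; intros Hle; simpl in Hk1; nra).
    assert (HN3 : (3 <= N k)%nat).
    { unfold c in Hck. pose proof (INR_ge1 _ (HNge k)).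
      destruct (le_lt_dec 3 (N k)); auto. exfalso.
      assert (INR (N k) <= 2) by (replace 2 with (INR 2) by (simpl; ring); apply le_INR; lia).
      assert (1/2 <= 1/INR (N k)) by (unfold Rdiv; rewrite !Rmult_1_l; apply Rinv_le_contravar; lra).
      lra. }
    destruct (Inv k) as [[_ [_ _]] [_ [_ [_ Sp4]]]].
    destruct Sp4 as [E1|[[_ Hn2]|[_ Hg]]]; [lia| |].
    + exfalso; apply Hk0. exists k; split; [unfold k; lia|split; [lia|auto]].
    + assert (HsX : sqnorm (X k) <= l).
      { rewrite HXt, sqnorm_trunc. apply psum_le_isum; auto. intros; apply pow2_ge_0. }
      assert (E : INR (N k - 1) = INR (N k) - 1) by (rewrite minus_INR by lia; simpl; ring).
      assert (3 <= INR (N k)) by (apply le_INR in HN3; simpl in HN3; lra).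
      rewrite E in Hg. unfold c in Hk1.
      assert ((1 / (INR (N k) - 1)) ^ 2 <= 4 * (1 / INR (N k)) ^ 2).
      { assert (1 / (INR (N k) - 1) <= 2 / INR (N k)).
        { apply (Rmult_le_reg_r (INR (N k) * (INR (N k) - 1))). nra. field_simplify; lra. }
        assert (0 < 1 / (INR (N k) - 1)) by (apply Rdiv_lt_0_compat; lra).
        replace (4 * (1 / INR (N k)) ^ 2) with ((2 / INR (N k)) ^ 2) by (field; lra).
        apply pow_incr; lra. }
      unfold eps in *. lra.
Qed.

Lemma erdos n U x T : (forall y, U y -> Dn n y) -> ropen n U ->
  ropen n (fun y => Dn n y /\ ~ U y) -> U x -> l2norm x < T ->
  exists y, U y /\ l2norm y = T.
Proof.
  intros HUD HU HUc Hx HxT. apply NNPP; intros Hno.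
  pose proof (l2norm_nonneg x) as Hn0.
  assert (Hsx : sqsummable x) by (apply (Dn_sqs n), HUD, Hx).
  destruct (HU x Hx) as [eps [He Heps]].
  destruct (trunc_close x Hsx eps He) as [m Hm].
  set (K := (m + n)%nat). set (x0 := trunc K x).
  apply (core n U T x0 K); auto.
  - apply Heps. apply Dn_trunc, HUD, Hx. rewrite l2dist_sym. apply Hm; unfold K; lia.
  - apply Rle_lt_trans with (sqnorm x). apply sqnorm_trunc_le; auto.
    unfold l2norm in HxT. pose proof (sqrt_sqrt (sqnorm x) (sqnorm_nonneg x Hsx)).
    pose proof (sqrt_pos (sqnorm x)). simpl; nra.
  - intros i Hi; apply trunc_zero; auto.
  - unfold K; lia.
  - intros y Hy E. apply Hno. exists y; split; auto. unfold l2norm; rewrite E.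
    apply sqrt_pow2. lra.
Qed.

Lemma sin_lip a b : Rabs (sin a - sin b) <= Rabs (a - b).
Proof.
  destruct (MVT_abs sin cos b a) as [c [Hc _]].
  { intros c _; apply derivable_pt_lim_sin. }
  rewrite Hc. pose proof (COS_bound c). pose proof (Rabs_pos (a - b)).
  assert (Rabs (cos c) <= 1) by (apply Rabs_le; lra). nra.
Qed.

Lemma part1 x : Ec x -> Pcar (fmap x).
Proof.
  intros [HS _]. split; [exact HS|]. simpl. pose proof (SIN_bound (l2norm x)). lra.
Qed.

Lemma part2 : continuous_on Ec Ec_open P_open fmap.
Proof.
  intros W [HWs HW]. split; [intros x [H _]; auto|].
  intros x [Hx HWx]. destruct (HW _ HWx) as [n [eps [He Heps]]].
  exists eps; split; auto. intros y Hy Hd. split; auto. apply Heps.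
  - apply part1; auto.
  - intros i Hi. simpl. eapply Rle_lt_trans; [apply coord_le; apply Hy || apply Hx|].
    rewrite l2dist_sym; auto.
  - simpl. replace ((1 + sin (l2norm y)) / 2 - (1 + sin (l2norm x)) / 2) with
      ((sin (l2norm y) - sin (l2norm x)) / 2) by field.
    pose proof (sin_lip (l2norm y) (l2norm x)).
    pose proof (norm_rev y x (proj2 Hy) (proj2 Hx)). rewrite l2dist_sym in H0.
    revert H H0. unfold Rabs; repeat destruct Rcase_abs; intros; lra.
Qed.

Lemma part3 x y : Ec x -> Ec y -> fmap x = fmap y -> x = y.
Proof. intros _ _ H. apply (f_equal fst) in H. exact H. Qed.

Lemma Y_Pcar q : Yset q -> Pcar q.
Proof. intros [x [Hx <-]]; apply part1; auto. Qed.

Lemma Y_open_of V W : P_open W -> (forall q, V q <-> Yset q /\ W q) -> Y_open V.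
Proof. intros HW HV. split. intros q Yq; apply HV; auto. exists W; auto. Qed.

Lemma Sset_nonneg r : Sset r -> 0 <= r.
Proof.
  intros [->|[k [Hk ->]]]; [lra|]. pose proof (INR_ge1 _ Hk).
  unfold Rdiv; rewrite Rmult_1_l; left; apply Rinv_0_lt_compat; lra.
Qed.

Lemma inv_le_inv a b : (1 <= a)%nat -> (a <= b)%nat -> 1 / INR b <= 1 / INR a.
Proof.
  intros Ha Hab. pose proof (INR_ge1 _ Ha). apply le_INR in Hab.
  unfold Rdiv; rewrite !Rmult_1_l; apply Rinv_le_contravar; lra.
Qed.

Lemma inv_lt_inv_rev a b : (1 <= a)%nat -> (1 <= b)%nat -> 1 / INR a < 1 / INR b -> (b < a)%nat.
Proof.
  intros Ha Hb H. destruct (le_lt_dec a b); auto. pose proof (inv_le_inv a b Ha l). lra.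
Qed.

Definition W1 i m : (nat -> R) * R -> Prop := fun q => Pcar q /\ fst q i < 1 / INR m.
Definition W2 i m : (nat -> R) * R -> Prop := fun q => Pcar q /\ ~ (fst q i < 1 / INR m).

Lemma W1_open i m : P_open (W1 i m).
Proof.
  split; [intros q [H _]; auto|]. intros q [Yq Hlt]. exists (S i), (1 / INR m - fst q i).
  split; [lra|]. intros q' Hq' Hc _. split; auto. specialize (Hc i ltac:(lia)).
  apply Rabs_def2 in Hc. lra.
Qed.

Lemma W2_open i m : (1 <= m)%nat -> P_open (W2 i m).
Proof.
  intros Hm. split; [intros q [H _]; auto|]. intros q [Yq Hge].
  assert (Hm1 : 0 < 1 / INR m) by (pose proof (INR_ge1 _ Hm); apply Rdiv_lt_0_compat; lra).
  destruct (proj1 Yq i) as [E|[k [Hk E]]]; [rewrite E in Hge; lra|].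
  assert (HkR := INR_ge1 _ Hk).
  exists (S i), (1 / INR k - 1 / INR (S k)). split.
  { pose proof (inv_le_inv k (S k) Hk ltac:(lia)). rewrite S_INR.
    apply Rlt_Rminus. unfold Rdiv; rewrite !Rmult_1_l; apply Rinv_lt_contravar; nra. }
  intros q' Hq' Hc _. split; auto. specialize (Hc i ltac:(lia)). rewrite E in Hc.
  apply Rabs_def2 in Hc. destruct (proj1 Hq' i) as [E'|[j [Hj E']]].
  - rewrite E' in Hc. assert (0 < 1 / INR (S k)) by (apply Rdiv_lt_0_compat; [lra|apply lt_0_INR; lia]). lra.
  - rewrite E' in *. assert (Hjk : (j < S k)%nat) by (apply inv_lt_inv_rev; auto; lia || lra).
    assert (Hkm : (k <= m)%nat).
    { destruct (le_lt_dec k m); auto. exfalso; apply Hge. rewrite E.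
      unfold Rdiv; rewrite !Rmult_1_l; apply Rinv_lt_contravar. pose proof (INR_ge1 _ Hm); nra.
      apply lt_INR; auto. }
    pose proof (inv_le_inv j k Hj ltac:(lia)). pose proof (inv_le_inv k m Hk Hkm). lra.
Qed.

Lemma Sset_sep a b : Sset a -> Sset b ->
  (forall m, (1 <= m)%nat -> (a < 1 / INR m <-> b < 1 / INR m)) -> a = b.
Proof.
  intros Ha Hb H. pose proof (Sset_nonneg a Ha); pose proof (Sset_nonneg b Hb).
  destruct (Rtotal_order a b) as [Hlt|[Heq|Hgt]]; auto; exfalso.
  - destruct Hb as [E|[k [Hk E]]]; [lra|]. specialize (H k Hk). rewrite <- E in H.
    apply (Rlt_irrefl b). apply H; auto.
  - destruct Ha as [E|[k [Hk E]]]; [lra|]. specialize (H k Hk). rewrite <- E in H.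
    apply (Rlt_irrefl a). apply H; auto.
Qed.

Lemma part4 : totally_disconnected Yset Y_open.
Proof.
  intros p Hp. destruct Hp as [x0 [Hx0 Ep]].
  exists (fun C => exists i m, (1 <= m)%nat /\
     C = (fun q => Yset q /\ (fst q i < 1 / INR m <-> fst p i < 1 / INR m))).
  split.
  - intros C [i [m [Hm ->]]]. destruct (classic (fst p i < 1 / INR m)) as [Hlt|Hge].
    + split.
      * apply (Y_open_of _ (W1 i m)). apply W1_open. intros q; unfold W1; split.
        intros [Yq Hi]; split; [auto|split; [apply Y_Pcar; auto|apply Hi; auto]].
        intros [Yq [_ Hi]]; split; [auto|split; auto].
      * apply (Y_open_of _ (W2 i m)). apply W2_open; auto. intros q; unfold W2; split.
        intros [Yq Hi]; split; [auto|split; [apply Y_Pcar; auto|]]. intros Hc; apply Hi; split; [auto|tauto].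
        intros [Yq [_ Hi]]; split; [auto|]. intros [_ Hc]. apply Hi, Hc; auto.
    + split.
      * apply (Y_open_of _ (W2 i m)). apply W2_open; auto. intros q; unfold W2; split.
        intros [Yq Hi]; split; [auto|split; [apply Y_Pcar; auto|]]. intros Hc; apply Hge, Hi; auto.
        intros [Yq [_ Hi]]; split; [auto|split; intros Hc; exfalso; auto].
      * apply (Y_open_of _ (W1 i m)). apply W1_open. intros q; unfold W1; split.
        intros [Yq Hi]; split; [auto|split; [apply Y_Pcar; auto|]].
        apply NNPP; intros Hc; apply Hi; split; auto; split; intros; exfalso; auto.
        intros [Yq [_ Hi]]; split; [auto|]. intros [_ Hc]. apply Hge, Hc; auto.
  - intros y. split.
    + intros ->. split; [exists x0; auto|]. intros C [i [m [Hm ->]]]. split; [exists x0; auto|tauto].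
    + intros [[x1 [Hx1 Ey]] HC]. subst y p. f_equal.
      apply functional_extensionality; intros i.
      apply Sset_sep; [apply Hx1|apply Hx0|]; intros m Hm.
      destruct (HC (fun q => Yset q /\ (fst q i < 1 / INR m <-> fst (fmap x0) i < 1 / INR m)))
        as [_ Hiff]; [exists i, m; split; auto|exact Hiff].
Qed.

Lemma ropen_ext n U U' : (forall z, U z <-> U' z) -> ropen n U' -> ropen n U.
Proof.
  intros E H y Hy. destruct (H y (proj1 (E y) Hy)) as [eps [He Heps]].
  exists eps; split; auto. intros z Hz Hd; apply E; auto.
Qed.

Lemma ropen_Y n V : Y_open V -> ropen n (fun z => Dn n z /\ V (fmap z)).
Proof.
  intros [HVs [W [HW HV]]] y [Hy HVy].
  pose proof (part2 W HW) as [_ HG].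
  destruct (HG y (conj (proj1 Hy) (proj2 (proj1 (HV _) HVy)))) as [eps [He Heps]].
  exists eps; split; auto. intros z Hz Hd. split; auto. apply HV. split.
  exists z; split; auto; apply Hz. apply (Heps z (proj1 Hz) Hd).
Qed.

Lemma Ec_Y z : Ec z -> Yset (fmap z).
Proof. intros H; exists z; auto. Qed.

Lemma clopen_pre n C : clopen Yset Y_open C ->
  ropen n (fun z => Dn n z /\ C (fmap z)) /\
  ropen n (fun z => Dn n z /\ ~ (Dn n z /\ C (fmap z))) /\
  ropen n (fun z => Dn n z /\ ~ C (fmap z)) /\
  ropen n (fun z => Dn n z /\ ~ (Dn n z /\ ~ C (fmap z))).
Proof.
  intros [H1 H2]. pose proof (ropen_Y n _ H1). pose proof (ropen_Y n _ H2).
  split; [auto|split; [|split]].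
  - eapply ropen_ext; [|exact H0]. intros z; split.
    + intros [Hz Hn]; split; auto. split; [apply Ec_Y, Hz|]. intros Hc; apply Hn; auto.
    + intros [Hz [_ Hn]]; split; auto. intros [_ Hc]; auto.
  - eapply ropen_ext; [|exact H0]. intros z; split.
    + intros [Hz Hn]; split; auto. split; [apply Ec_Y, Hz|auto].
    + intros [Hz [_ Hn]]; split; auto.
  - eapply ropen_ext; [|exact H]. intros z; split.
    + intros [Hz Hn]; split; auto. apply NNPP; intros Hc; apply Hn; auto.
    + intros [Hz Hc]; split; auto. intros [_ Hn]; auto.
Qed.

Lemma Dn0 z : Ec z -> Dn 0 z.
Proof. intros H; split; auto; intros; lia. Qed.

Lemma key_coh C T0 : clopen Yset Y_open C -> (exists y, C y) ->
  exists z, Ec z /\ C (fmap z) /\ sin (l2norm z) = sin T0.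
Proof.
  intros HC [y Hy].
  assert (HCY : forall q, C q -> Yset q) by (destruct HC as [[H _] _]; auto).
  destruct (HCY y Hy) as [x1 [Hx1 <-]].
  destruct (clopen_pre 0 C HC) as [Ho1 [Ho2 _]].
  pose proof PI_RGT_0.
  destruct (INR_archimed (2 * PI) (l2norm x1 - T0) ltac:(lra)) as [m Hm].
  destruct (erdos 0 (fun z => Dn 0 z /\ C (fmap z)) x1 (T0 + 2 * INR m * PI)) as [z [[Hz HCz] Hn]].
  - intros z [Hh _]; auto.
  - auto.
  - eapply ropen_ext; [|exact Ho2]. intros z; tauto.
  - split; auto; apply Dn0; auto.
  - lra.
  - exists z; split; [apply Hz|split; auto]. rewrite Hn. apply sin_period.
Qed.


Definition Wlt : (nat -> R) * R -> Prop := fun q => Pcar q /\ snd q < 1.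
Definition Wgt : (nat -> R) * R -> Prop := fun q => Pcar q /\ snd q > 0.

Lemma Wlt_open : P_open Wlt.
Proof.
  split; [intros q [H _]; auto|]. intros q [Hq Hlt]. exists O, (1 - snd q). split; [lra|].
  intros q' Hq' _ Hs; split; auto. apply Rabs_def2 in Hs; lra.
Qed.

Lemma Wgt_open : P_open Wgt.
Proof.
  split; [intros q [H _]; auto|]. intros q [Hq Hlt]. exists O, (snd q). split; [lra|].
  intros q' Hq' _ Hs; split; auto. apply Rabs_def2 in Hs; lra.
Qed.

Lemma part5 : cohesive Yset Y_open.
Proof.
  intros p [x [Hx <-]].
  destruct (Rlt_or_le (sin (l2norm x)) 1) as [Hs|Hs].
  - exists (fun q => Yset q /\ snd q < 1). split.
    + split; [intros q [H _]; auto|]. exists (fun q => Yset q /\ snd q < 1). split.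
      * apply (Y_open_of _ Wlt Wlt_open). intros q; unfold Wlt; split.
        intros [Hq H]; split; auto; split; auto; apply Y_Pcar; auto. tauto.
      * split; [split; [apply Ec_Y; auto|simpl; lra]|intros q H; auto].
    + intros C HC Hne Hsub. destruct (key_coh C (PI/2) HC Hne) as [z [Hz [HCz Hsz]]].
      destruct (Hsub _ HCz) as [_ Hlt]. simpl in Hlt. rewrite Hsz, sin_PI2 in Hlt. lra.
  - exists (fun q => Yset q /\ snd q > 0). split.
    + split; [intros q [H _]; auto|]. exists (fun q => Yset q /\ snd q > 0). split.
      * apply (Y_open_of _ Wgt Wgt_open). intros q; unfold Wgt; split.
        intros [Hq H]; split; auto; split; auto; apply Y_Pcar; auto. tauto.
      * split; [split; [apply Ec_Y; auto|simpl; lra]|intros q H; auto].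
    + intros C HC Hne Hsub. destruct (key_coh C (3 * (PI/2)) HC Hne) as [z [Hz [HCz Hsz]]].
      destruct (Hsub _ HCz) as [_ Hlt]. simpl in Hlt. rewrite Hsz, sin_3PI2 in Hlt. lra.
Qed.

Lemma l2norm_zero : l2norm (fun _ => 0) = 0.
Proof.
  unfold l2norm. rewrite (sqnorm_finite_eq _ O) by auto. simpl. apply sqrt_0.
Qed.

Lemma Ec_zero : Ec (fun _ => 0).
Proof. split. intros; apply Sset_0. apply (sqs_finite _ O); auto. Qed.

Lemma part6 : ~ almost_zero_dimensional Yset Y_open.
Proof.
  intros H. set (x0 := fun _ : nat => 0). set (p := fmap x0).
  assert (Hp : Yset p) by (apply Ec_Y, Ec_zero).
  assert (Hsp : snd p = 1/2) by (simpl; unfold x0; rewrite l2norm_zero, sin_0; lra).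
  destruct (H p Hp (fun q => Yset q /\ snd q < 1)) as [N [[HNs [U0 [HU0 [HU0p HU0N]]]] [[F [HF HN]] HNU]]].
  { apply (Y_open_of _ Wlt Wlt_open). intros q; unfold Wlt; split.
    intros [Hq H']; split; auto; split; auto; apply Y_Pcar; auto. tauto. }
  { split; auto; lra. }
  destruct HU0 as [_ [W0 [HW0 HU0W]]].
  destruct (proj1 (HU0W p) HU0p) as [_ HW0p].
  destruct (proj2 HW0 p HW0p) as [n [eps [He Heps]]].
  assert (ClA : forall z, Dn n z -> sin (l2norm z) = 0 -> N (fmap z)).
  { intros z Hz Hs. apply HU0N, HU0W. split; [apply Ec_Y, Hz|]. apply Heps.
    - apply part1, Hz.
    - intros i Hi. simpl. rewrite (proj2 Hz i Hi). unfold x0. rewrite Rminus_0_r, Rabs_R0; lra.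
    - simpl. rewrite Hs. unfold x0. rewrite l2norm_zero, sin_0. rewrite Rminus_diag, Rabs_R0; lra. }
  assert (ClB : forall y, Dn n y -> l2norm y = PI / 2 -> N (fmap y)).
  { intros y Hy Hn. apply HN. split; [apply Ec_Y, Hy|]. intros C HCF. apply NNPP; intros HnC.
    destruct (clopen_pre n C (HF C HCF)) as [_ [_ [Ho3 Ho4]]].
    destruct (erdos n (fun z => Dn n z /\ ~ C (fmap z)) y PI) as [z [[Hz HnCz] Hzn]].
    - intros z [Hh _]; auto.
    - auto.
    - auto.
    - split; auto.
    - rewrite Hn. pose proof PI_RGT_0. lra.
    - apply HnCz. apply (proj1 (HN (fmap z)) (ClA z Hz ltac:(rewrite Hzn; apply sin_PI))). auto. }
  destruct (erdos n (Dn n) x0 (PI / 2)) as [y [Hy Hyn]].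
  - auto.
  - intros y Hy. exists 1; split; [lra|]. intros; auto.
  - intros y [Hy Hn]; contradiction.
  - split; [apply Ec_zero|intros; auto].
  - unfold x0; rewrite l2norm_zero. pose proof PI_RGT_0. lra.
  - destruct (HNU _ (ClB y Hy Hyn)) as [_ Hlt]. simpl in Hlt. rewrite Hyn, sin_PI2 in Hlt. lra.
Qed.

Theorem mainTheorem4 :
  (forall x, Ec x -> Pcar (fmap x)) /\
  continuous_on Ec Ec_open P_open fmap /\
  (forall x y, Ec x -> Ec y -> fmap x = fmap y -> x = y) /\
  totally_disconnected Yset Y_open /\
  cohesive Yset Y_open /\
  ~ almost_zero_dimensional Yset Y_open.
Proof.
  split; [exact part1|split; [exact part2|split; [exact part3|split; [exact part4|split; [exact part5|exact part6]]]]].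
Qed.
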